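(* Let $\Gamma\subseteq A$ be $\Bbbk$-algebras, $\sim$ an equivalence relation on $\mathrm{cfs}(\Gamma)$, with $\Gamma$ a Harish-Chandra block subalgebra of $A$, and let $V$ be a Harish-Chandra block module. Then: (i) if $\mathcal D\subseteq\mathrm{cfs}(\Gamma)/{\sim}$ is $\prec$-closed (i.e. $B\in\mathcal D$ and $B\prec C$ imply $C\in\mathcal D$), then $V(\mathcal D):=\bigoplus_{B\in\mathcal D}V(B)$ is an $A$-submodule of $V$; (ii) $V=\bigoplus_{\mathcal D\in(\mathrm{cfs}(\Gamma)/{\sim})/\Delta}V(\mathcal D)$ as $A$-modules; (iii) if $V$ is indecomposable and $B\in\mathrm{Supp}(V)$, then $\mathrm{Supp}(V)$ is contained in the $\Delta$-class of $B$; (iv) if $V$ is irreducible and $B\in\mathrm{Supp}(V)$, then $\mathrm{Supp}(V)$ is contained in the $\nabla$-class of $B$.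
   Context: $\mathrm{cfs}(\Gamma)$: maximal two-sided ideals $\mathfrak m$ with $\dim\Gamma/\mathfrak m<\infty$. For a class $B$, $\mathcal W(B)=\{\mathfrak m_1\cdots\mathfrak m_k:k\ge0,\mathfrak m_i\in B\}$; for a $\Gamma$-module $V$, $V(B)=\{v:\mathfrak mv=0$ for some $\mathfrak m\in\mathcal W(B)\}$; $V$ is a block module if $V=\bigoplus_BV(B)$; $\mathrm{Supp}(V)=\{B:V(B)\ne0\}$. A Harish-Chandra block module is an $A$-module that is a block module over $\Gamma$. $\Gamma$ is a Harish-Chandra block subalgebra of $A$ if $A/A\mathfrak m$ is a block module for every $B$ and $\mathfrak m\in\mathcal W(B)$. $\prec$ is the preorder on $\mathrm{cfs}(\Gamma)/{\sim}$ generated by $B\prec C$ whenever $C\in\mathrm{Supp}(A/A\mathfrak m)$ for some $\mathfrak m\in B$; $\Delta$ is the equivalence relation generated by $\prec$ and $\nabla$ the equivalence relation induced by $\prec$ ($B\nabla C$ iff $B\prec C$ and $C\prec B$). *)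

(* Defs.v *)
From mathcomp Require Import all_boot all_algebra.
From Stdlib Require Import Relations.
From Stdlib Require List.
Set Implicit Arguments. Unset Strict Implicit. Unset Printing Implicit Defensive.
Import GRing.Theory.
Local Open Scope ring_scope.

Section Defs.
Variables (k : fieldType) (A : algType k).

Definition is_subalgebra (G : A -> Prop) : Prop :=
  [/\ G 0, G 1, (forall x y, G x -> G y -> G (x + y)),
      (forall (c : k) x, G x -> G (c *: x)) & (forall x y, G x -> G y -> G (x * y))].

Definition is_ideal (G : A -> Prop) (I : A -> Prop) : Prop :=
  [/\ forall x, I x -> G x, I 0,
      (forall x y, I x -> I y -> I (x - y)),
      (forall g x, G g -> I x -> I (g * x)) & (forall g x, G g -> I x -> I (x * g))].

Definition is_maximal_ideal (G : A -> Prop) (I : A -> Prop) : Prop :=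
  [/\ is_ideal G I, I <> G &
      forall J, is_ideal G J -> (forall x, I x -> J x) -> J = I \/ J = G].

Definition finite_codim (G : A -> Prop) (I : A -> Prop) : Prop :=
  exists n (e : 'I_n -> A), (forall i, G (e i)) /\
    forall g, G g -> exists c : 'I_n -> k, I (g - \sum_(i < n) c i *: e i).

Definition cfs (G : A -> Prop) (I : A -> Prop) : Prop :=
  is_maximal_ideal G I /\ finite_codim G I.

Definition equiv_on (P : (A -> Prop) -> Prop) (R : (A -> Prop) -> (A -> Prop) -> Prop) :=
  [/\ (forall m, P m -> R m m),
      (forall m n, P m -> P n -> R m n -> R n m) &
      (forall m n p, P m -> P n -> P p -> R m n -> R n p -> R m p)].

Variables (G : A -> Prop) (sim : (A -> Prop) -> (A -> Prop) -> Prop).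

Definition isClass (B : (A -> Prop) -> Prop) : Prop :=
  exists m, cfs G m /\ B = (fun n => cfs G n /\ sim m n).

Definition idealMul (I J : A -> Prop) : A -> Prop :=
  fun x => exists n (a b : 'I_n -> A), (forall i, I (a i) /\ J (b i)) /\
                                     x = \sum_(i < n) a i * b i.

Fixpoint iprod (s : seq (A -> Prop)) : A -> Prop :=
  match s with [::] => G | m :: s' => idealMul m (iprod s') end.

Definition Wprod (B : (A -> Prop) -> Prop) (I : A -> Prop) : Prop :=
  exists s : seq (A -> Prop), (forall m, List.In m s -> B m) /\ I = iprod s.

(** Generic Gamma-module theory for a quotient M / N, where M is a k-vector
    space, act : A -> M -> M (only elements of G are used) and N a
    Gamma-stable subspace.  Sets of M/N are represented by their preimages
    in M. For a genuine module V we take N = {0}. *)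
Section Quot.
Variables (M : lmodType k) (act : A -> M -> M) (N : M -> Prop).

Definition comp (B : (A -> Prop) -> Prop) : M -> Prop :=
  fun x => exists I, Wprod B I /\ forall g, I g -> N (act g x).

Definition sumsp (I : Type) (P : I -> Prop) (W : I -> M -> Prop) : M -> Prop :=
  fun x => exists n (j : 'I_n -> I) (w : 'I_n -> M),
    (forall i, P (j i) /\ W (j i) (w i)) /\ N (x - \sum_(i < n) w i).

Definition is_dsum (I : Type) (P : I -> Prop) (W : I -> M -> Prop) : Prop :=
  (forall x, sumsp P W x) /\
  (forall n (j : 'I_n -> I) (w : 'I_n -> M), injective j ->
     (forall i, P (j i) /\ W (j i) (w i)) -> N (\sum_(i < n) w i) ->
     forall i, N (w i)).

Definition block_module : Prop := is_dsum isClass comp.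

Definition Supp (B : (A -> Prop) -> Prop) : Prop :=
  isClass B /\ exists x, comp B x /\ ~ N x.
End Quot.

Definition leftIdeal (m : A -> Prop) : A -> Prop :=
  fun x => exists n (a g : 'I_n -> A), (forall i, m (g i)) /\
                                     x = \sum_(i < n) a i * g i.

Definition lmul : A -> A -> A := fun a x => a * x.

Definition HC_block_subalgebra : Prop :=
  forall B, isClass B -> forall m, Wprod B m ->
    block_module lmul (leftIdeal m).

Definition prec_gen (B C : (A -> Prop) -> Prop) : Prop :=
  isClass B /\ isClass C /\ exists m, B m /\ Supp lmul (leftIdeal m) C.

Definition prec := clos_refl_trans _ prec_gen.
Definition Delta := clos_refl_sym_trans _ prec_gen.
Definition nabla B C := prec B C /\ prec C B.

Section Mod.
Variables (V : lmodType k) (act : A -> V -> V).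

Definition is_Amodule : Prop :=
  [/\ (forall a x y, act a (x + y) = act a x + act a y) /\
      (forall a (c : k) x, act a (c *: x) = c *: act a x),
      (forall a b x, act (a + b) x = act a x + act b x),
      (forall (c : k) a x, act (c *: a) x = c *: act a x),
      (forall x, act 1 x = x) &
      (forall a b x, act (a * b) x = act a (act b x))].

Definition zeroV : V -> Prop := fun x => x = 0.

Definition is_Asubmodule (U : V -> Prop) : Prop :=
  [/\ U 0, (forall x y, U x -> U y -> U (x + y)),
      (forall (c : k) x, U x -> U (c *: x)) &
      (forall a x, U x -> U (act a x))].

Definition nonzero_module : Prop := exists v : V, v <> 0.

Definition indecomposable : Prop :=
  nonzero_module /\
  forall U1 U2, is_Asubmodule U1 -> is_Asubmodule U2 ->
    (forall v, exists u1 u2, U1 u1 /\ U2 u2 /\ v = u1 + u2) ->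
    (forall v, U1 v -> U2 v -> v = 0) ->
    (forall v, U1 v -> v = 0) \/ (forall v, U2 v -> v = 0).

Definition irreducible : Prop :=
  nonzero_module /\
  forall U, is_Asubmodule U -> (forall v, U v -> v = 0) \/ (forall v, U v).

Definition VD (D : ((A -> Prop) -> Prop) -> Prop) : V -> Prop :=
  sumsp zeroV D (comp act zeroV).
End Mod.

End Defs.

(* Main.v *)
Require Import Defs.
From mathcomp Require Import all_boot all_algebra.
From Stdlib Require Import Relations Classical ClassicalEpsilon.
From Stdlib Require List.
Set Implicit Arguments. Unset Strict Implicit. Unset Printing Implicit Defensive.
Import GRing.Theory.
Local Open Scope ring_scope.

Definition dec (P : Prop) : bool := if excluded_middle_informative P then true else false.
Lemma decP (P : Prop) : reflect P (dec P).
Proof. rewrite /dec; case: excluded_middle_informative => H; by constructor. Qed.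

Section Gen.
Variables (k : fieldType) (M : lmodType k) (I : Type) (P : I -> Prop)
  (W : I -> M -> Prop) (N : M -> Prop).
Hypotheses (N0 : N 0) (Nadd : forall x y, N x -> N y -> N (x + y))
  (Nopp : forall x, N x -> N (- x)).

Lemma Nsub x y : N x -> N y -> N (x - y).
Proof. by move=> *; apply: Nadd => //; apply: Nopp. Qed.

Lemma Nsum n (F : 'I_n -> M) (Q : pred 'I_n) : (forall i, Q i -> N (F i)) -> N (\sum_(i < n | Q i) F i).
Proof. by move=> H; apply: (big_ind N) => //. Qed.

Lemma Nsum_seq (T : Type) (s : seq T) (F : T -> M) (Q : pred T) :
  (forall p, List.In p s -> Q p -> N (F p)) -> N (\sum_(p <- s | Q p) F p).
Proof.
elim: s => [|p s IH] H; first by rewrite big_nil.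
rewrite big_cons; case: ifP => Hq.
  by apply: Nadd; [apply: H => //; left | apply: IH => q Hq'; apply: H; right].
by apply: IH => q Hq'; apply: H; right.
Qed.

Lemma In_nth (T : Type) (d : T) (s : seq T) i : (i < size s)%N -> List.In (nth d s i) s.
Proof. elim: s i => [|p s IH] [|i] //= H; [by left | right; exact: IH]. Qed.

Definition good (t : seq (I * M)) := forall p, List.In p t -> P p.1 /\ W p.1 p.2.

Lemma sumspE x : sumsp N P W x <-> exists t, good t /\ N (x - \sum_(p <- t) p.2).
Proof.
split.
  move=> [n [j [w [H1 H2]]]].
  exists [seq (j i, w i) | i <- enum 'I_n]; split.
    move=> p /List.in_map_iff [i [<- _]] /=; exact: H1.
  by rewrite big_map big_enum.
move=> [t [H1 H2]].
case: t H1 H2 => [|p0 t] H1 H2.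
  have f : 'I_0 -> I by case=> m; rewrite ltn0.
  exists 0%N, f, (fun _ => 0); split; first by case.
  by move: H2; rewrite big_nil big_ord0.
exists (size (p0 :: t)), (fun i => (nth p0 (p0 :: t) i).1), (fun i => (nth p0 (p0 :: t) i).2).
split; first by move=> i; apply: H1; apply: In_nth.
by move: H2; rewrite (big_nth p0) big_mkord.
Qed.

Hypothesis Wadd : forall c x y, P c -> W c x -> W c y -> W c (x + y).
Definition direct := forall n (j : 'I_n -> I) (w : 'I_n -> M), injective j ->
  (forall i, P (j i) /\ W (j i) (w i)) -> N (\sum_(i < n) w i) -> forall i, N (w i).

Lemma group_ord (Hd : direct) n j w : (forall i, P (j i) /\ W (j i) (w i)) ->
  N (\sum_(i < n) w i) -> forall Q : pred I, N (\sum_(i < n | Q (j i)) w i).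
Proof.
elim: n j w => [|n IH] j w Hjw Hs Q; first by rewrite big_ord0.
case: (classic (injective j)) => Hinj.
  by apply: Nsum => i _; exact: Hd Hinj Hjw Hs i.
have [i1 [i2 [Hj Hne]]] : exists i1 i2, j i1 = j i2 /\ i1 <> i2.
  apply: NNPP => Hn; apply: Hinj => x y Hxy; apply: NNPP => Hxy'; by apply: Hn; exists x, y.
have /unlift_some [k0 Hk0 _] : i2 != i1 by apply/eqP => E; apply Hne; rewrite E.
pose j' (i : 'I_n) := j (lift i2 i).
pose w' (i : 'I_n) := w (lift i2 i) + (if i == k0 then w i2 else 0).
have HQ : forall Q : pred I, \sum_(i < n | Q (j' i)) w' i = \sum_(i < n.+1 | Q (j i)) w i.
  move=> R; rewrite big_mkcond [RHS]big_mkcond (bigD1_ord i2) //=.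
  rewrite addrC.
  transitivity (\sum_(i < n) ((if R (j (lift i2 i)) then w (lift i2 i) else 0) +
       (if i == k0 then (if R (j i2) then w i2 else 0) else 0))).
    apply: eq_bigr => i _; rewrite /j' /w'; case: eqP => [->|_]; last by rewrite !addr0.
    by rewrite -Hk0 -Hj; case: (R (j i1)); rewrite ?addr0.
  rewrite big_split /= -[X in _ + X = _]big_mkcond /=. by rewrite big_pred1_eq.
rewrite -HQ; apply: IH.
  move=> i; rewrite /j' /w'; case: eqP => [->|_]; last by rewrite addr0; apply: (Hjw (lift i2 i)).
  rewrite -Hk0; split; first exact: (Hjw i1).1.
  by apply: Wadd; [exact: (Hjw i1).1 | exact: (Hjw i1).2 | rewrite Hj; exact: (Hjw i2).2].
by have := HQ xpredT => /= ->.
Qed.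

Lemma group_seq (Hd : direct) t : good t -> N (\sum_(p <- t) p.2) ->
  forall Q : pred I, N (\sum_(p <- t | Q p.1) p.2).
Proof.
case: t => [|p0 t] Ht Hs Q; first by rewrite big_nil.
move: Hs; rewrite !(big_nth p0) !big_mkord => Hs.
apply: (group_ord Hd (j := fun i => (nth p0 (p0 :: t) i).1)) => // i.
by apply: Ht; apply: In_nth.
Qed.

End Gen.

From Stdlib Require Import FunctionalExtensionality PropExtensionality.

Section Cat.
Variables (T : Type) (n1 n2 : nat) (f1 : 'I_n1 -> T) (f2 : 'I_n2 -> T).
Definition catf (i : 'I_(n1 + n2)) : T :=
  match split i with inl j => f1 j | inr j => f2 j end.
Lemma catf_l i : catf (lshift n2 i) = f1 i.
Proof. by rewrite /catf (unsplitK (inl _ i)). Qed.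
Lemma catf_r i : catf (rshift n1 i) = f2 i.
Proof. by rewrite /catf (unsplitK (inr _ i)). Qed.
End Cat.

Lemma catf_case (T1 T2 : Type) n1 n2 (f1 : 'I_n1 -> T1) (f2 : 'I_n2 -> T1)
  (g1 : 'I_n1 -> T2) (g2 : 'I_n2 -> T2) (Pr : T1 -> T2 -> Prop) :
  (forall i, Pr (f1 i) (g1 i)) -> (forall i, Pr (f2 i) (g2 i)) ->
  forall i, Pr (catf f1 f2 i) (catf g1 g2 i).
Proof. by move=> H1 H2 i; rewrite /catf; case: (split i). Qed.

Section Alg.
Variables (k : fieldType) (A : algType k) (G : A -> Prop).
Hypothesis HG : is_subalgebra G.

Lemma G0 : G 0. Proof. by case: HG. Qed.
Lemma G1 : G 1. Proof. by case: HG. Qed.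
Lemma Gadd x y : G x -> G y -> G (x + y). Proof. by case: HG => _ _ H _ _; apply: H. Qed.
Lemma Gmul x y : G x -> G y -> G (x * y). Proof. by case: HG => _ _ _ _ H; apply: H. Qed.

Definition iprops (J : A -> Prop) := [/\ forall x, J x -> G x, J 0,
  forall x y, J x -> J y -> J (x + y) & forall g x, G g -> J x -> J (g * x)].

Lemma iG : iprops G.
Proof. split; [by [] | exact: G0 | exact: Gadd | exact: Gmul]. Qed.

Lemma ideal_add (m : A -> Prop) x y : is_ideal G m -> m x -> m y -> m (x + y).
Proof.
case=> _ H0 Hs _ _ Hx Hy; have := Hs x (0 - y) Hx (Hs _ _ H0 Hy).
by rewrite sub0r opprK.
Qed.

Lemma idealMul_props (m J : A -> Prop) : is_ideal G m -> iprops J -> iprops (idealMul m J).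
Proof.
move=> Hm [JG J0 Jadd Jl]; have [mG m0 _ ml mr] := Hm; split.
- move=> x [n [a [b [Hab ->]]]]; apply: (big_ind G) => //; [exact: G0|exact: Gadd|].
  by move=> i _; apply: Gmul; [apply: mG; exact: (Hab i).1 | apply: JG; exact: (Hab i).2].
- exists 0%N, (fun _ => 0), (fun _ => 0); split; first by case.
  by rewrite big_ord0.
- move=> x y [n1 [a1 [b1 [H1 ->]]]] [n2 [a2 [b2 [H2 ->]]]].
  exists (n1 + n2)%N, (catf a1 a2), (catf b1 b2); split.
    by apply: (catf_case (Pr := fun u v => m u /\ J v)).
  by rewrite big_split_ord /=; congr (_ + _); apply: eq_bigr => i _;
    rewrite ?catf_l ?catf_r.
- move=> g x Hg [n [a [b [Hab ->]]]]; exists n, (fun i => g * a i), b; split.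
    by move=> i; split; [apply: ml => //; exact: (Hab i).1 | exact: (Hab i).2].
  by rewrite mulr_sumr; apply: eq_bigr => i _; rewrite mulrA.
Qed.

Lemma idealMul_sub (m J : A -> Prop) x : is_ideal G m -> iprops J -> idealMul m J x -> J x.
Proof.
move=> [mG _ _ _ _] [_ J0 Jadd Jl] [n [a [b [Hab ->]]]].
apply: (big_ind J) => // i _; apply: Jl; [apply: mG; exact: (Hab i).1 | exact: (Hab i).2].
Qed.

Lemma idealMul_mono (m J J' : A -> Prop) x : (forall y, J y -> J' y) -> idealMul m J x -> idealMul m J' x.
Proof.
move=> HJ [n [a [b [Hab ->]]]]; exists n, a, b; split => // i.
by split; [exact: (Hab i).1 | apply: HJ; exact: (Hab i).2].
Qed.

Lemma cfs_ideal (m : A -> Prop) : cfs G m -> is_ideal G m.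
Proof. by case; case. Qed.

Definition allcfs (s : seq (A -> Prop)) := forall m, List.In m s -> cfs G m.

Lemma iprod_props s : allcfs s -> iprops (iprod G s).
Proof.
elim: s => [|m s IH] Hs /=; first exact: iG.
apply: idealMul_props; first by apply: cfs_ideal; apply: Hs; left.
by apply: IH => m' H; apply: Hs; right.
Qed.

Lemma iprod_cat_l s1 s2 x : allcfs s2 -> iprod G (s1 ++ s2) x -> iprod G s1 x.
Proof.
move=> H2; elim: s1 x => [|m s1 IH] x /=.
  by case: (iprod_props H2) => HG' _ _ _; apply: HG'.
by apply: idealMul_mono.
Qed.

Lemma iprod_cat_r s1 s2 x : allcfs (s1 ++ s2) -> iprod G (s1 ++ s2) x -> iprod G s2 x.
Proof.
elim: s1 x => [|m s1 IH] x //= Hs Hx; apply: IH.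
  by move=> m' H; apply: Hs; right.
apply: (idealMul_sub (m := m)) => //; first by apply: cfs_ideal; apply: Hs; left.
by apply: iprod_props => m' H; apply: Hs; right.
Qed.

Lemma idealMulG (m : A -> Prop) : is_ideal G m -> idealMul m G = m.
Proof.
move=> Hm; have [mG m0 ms ml mr] := Hm.
apply: functional_extensionality => x; apply: propositional_extensionality; split.
  move=> [n [a [b [Hab ->]]]]; apply: (big_ind m) => //; first by move=> u v; exact: ideal_add Hm.
  by move=> i _; apply: mr; [exact: (Hab i).2 | exact: (Hab i).1].
move=> Hx; exists 1%N, (fun _ => x), (fun _ => 1); split; first by move=> i; split => //; exact: G1.
by rewrite big_ord1 mulr1.
Qed.

Lemma LI0 (J : A -> Prop) : leftIdeal J 0.
Proof.
exists 0%N, (fun _ => 0), (fun _ => 0); split; first by case.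
by rewrite big_ord0.
Qed.

Lemma LIadd (J : A -> Prop) x y : leftIdeal J x -> leftIdeal J y -> leftIdeal J (x + y).
Proof.
move=> [n1 [a1 [g1 [H1 ->]]]] [n2 [a2 [g2 [H2 ->]]]].
exists (n1 + n2)%N, (catf a1 a2), (catf g1 g2); split.
  move=> i; exact: (catf_case (f1:=g1) (f2:=g2) (g1:=g1) (g2:=g2) (Pr := fun _ v => J v) H1 H2 i).
by rewrite big_split_ord /=; congr (_ + _); apply: eq_bigr => i _;
  rewrite ?catf_l ?catf_r.
Qed.

Lemma LImul (J : A -> Prop) c x : leftIdeal J x -> leftIdeal J (c * x).
Proof.
move=> [n [a [g [H ->]]]]; exists n, (fun i => c * a i), g; split => //.
by rewrite mulr_sumr; apply: eq_bigr => i _; rewrite mulrA.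
Qed.

Lemma LIopp (J : A -> Prop) x : leftIdeal J x -> leftIdeal J (- x).
Proof. by move=> H; rewrite -mulN1r; apply: LImul. Qed.

Lemma LIscale (J : A -> Prop) (c : k) x : leftIdeal J x -> leftIdeal J (c *: x).
Proof. by move=> H; rewrite -mulr_algl; apply: LImul. Qed.

End Alg.

Section Comp.
Variables (k : fieldType) (A : algType k) (G : A -> Prop)
  (sim : (A -> Prop) -> (A -> Prop) -> Prop).
Hypothesis HG : is_subalgebra G.

Lemma class_cfs (B : (A -> Prop) -> Prop) : isClass G sim B -> forall m, B m -> cfs G m.
Proof. by move=> [m0 [_ ->]] m []. Qed.

Lemma Wprod_all (B : (A -> Prop) -> Prop) s : isClass G sim B ->
  (forall m, List.In m s -> B m) -> allcfs G s.
Proof. by move=> HB Hs m Hm; apply: (class_cfs HB); apply: Hs. Qed.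

Variables (M : lmodType k) (act : A -> M -> M) (N : M -> Prop).
Hypotheses (N0 : N 0) (Nadd : forall x y, N x -> N y -> N (x + y))
  (Nopp : forall x, N x -> N (- x))
  (actD : forall g x y, act g (x + y) = act g x + act g y).

Lemma act0 g : act g 0 = 0.
Proof. by apply: (@addrI _ (act g 0)); rewrite -actD !addr0. Qed.

Lemma actN g x : act g (- x) = - act g x.
Proof. by apply: (@addrI _ (act g x)); rewrite -actD !subrr act0. Qed.

Lemma comp0 B : Defs.comp G act N B 0.
Proof.
exists G; split; first by exists [::]; split.
by move=> g _; rewrite act0.
Qed.

Lemma comp_add B x y : isClass G sim B -> Defs.comp G act N B x -> Defs.comp G act N B y ->
  Defs.comp G act N B (x + y).
Proof.
move=> HB [I1 [[s1 [Hs1 ->]] H1]] [I2 [[s2 [Hs2 ->]] H2]].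
have Hs : forall m, List.In m (s1 ++ s2) -> B m.
  by move=> m Hm; case: (List.in_app_or _ _ _ Hm) => ?; [apply: Hs1 | apply: Hs2].
have Hc := Wprod_all HB Hs.
have Hc2 := Wprod_all HB Hs2.
exists (iprod G (s1 ++ s2)); split; first by exists (s1 ++ s2).
move=> g Hg; rewrite actD; apply: Nadd.
  by apply: H1; apply: (iprod_cat_l HG Hc2).
by apply: H2; apply: (iprod_cat_r HG Hc).
Qed.

Lemma comp_opp B x : Defs.comp G act N B x -> Defs.comp G act N B (- x).
Proof. by move=> [I [HI H]]; exists I; split => // g Hg; rewrite actN; apply: Nopp; apply: H. Qed.

End Comp.

Lemma LI_mono (k : fieldType) (A : algType k) (J J' : A -> Prop) x :
  (forall y, J y -> J' y) -> leftIdeal J x -> leftIdeal J' x.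
Proof. by move=> HJ [n [a [g [Hg ->]]]]; exists n, a, g; split => // i; apply: HJ. Qed.

Lemma LI_rmul (k : fieldType) (A : algType k) (m J : A -> Prop) u b :
  leftIdeal m u -> J b -> leftIdeal (idealMul m J) (u * b).
Proof.
move=> [n [a [g [Hg ->]]]] Hb; exists n, a, (fun i => g i * b); split.
  move=> i; exists 1%N, (fun _ => g i), (fun _ => b); split => //.
  by rewrite big_ord1.
by rewrite mulr_suml; apply: eq_bigr => i _; rewrite mulrA.
Qed.

Section Main.
Variables (k : fieldType) (A : algType k) (G : A -> Prop)
  (sim : (A -> Prop) -> (A -> Prop) -> Prop).
Hypotheses (HG : is_subalgebra G) (HHC : HC_block_subalgebra G sim).

Lemma lmulD (g x y : A) : @lmul _ A g (x + y) = lmul g x + lmul g y.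
Proof. by rewrite /lmul mulrDr. Qed.

Lemma suppS B (HB : isClass G sim B) s : (forall m, List.In m s -> B m) ->
  forall C y, isClass G sim C -> Defs.comp G (@lmul _ A) (leftIdeal (iprod G s)) C y ->
  ~ leftIdeal (iprod G s) y -> prec G sim B C.
Proof.
elim: s => [|m s IH] Hs C y HC Hc Hy.
  case: Hy; exists 1%N, (fun _ => y), (fun _ => 1); split; first by move=> _; exact: (G1 HG).
  by rewrite big_ord1 mulr1.
have Hs' : forall m', List.In m' s -> B m' by move=> m' H; apply: Hs; right.
have Hall' := Wprod_all HB Hs'.
have Hm : is_ideal G m by apply: cfs_ideal; apply: (class_cfs HB); apply: Hs; left.
have HI' := iprod_props HG Hall'.
set I := iprod G (m :: s) in Hc Hy *.
have II' : forall x, I x -> iprod G s x := fun x Hx => idealMul_sub Hm HI' Hx.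
case: (classic (leftIdeal (iprod G s) y)) => HyI'; last first.
  apply: (IH Hs' C y HC) => //.
  case: Hc => J [HJ HJg]; exists J; split => // g Hg; apply: (LI_mono II'); exact: HJg.
pose R z := exists t : seq (((A -> Prop) -> Prop) * A),
  (forall p, List.In p t -> [/\ isClass G sim p.1, Defs.comp G (@lmul _ A) (leftIdeal I) p.1 p.2
     & (leftIdeal I p.2 \/ prec_gen G sim B p.1)]) /\ leftIdeal I (z - \sum_(p <- t) p.2).
have R0 : R 0 by exists [::]; split => //; rewrite big_nil subr0; apply: LI0.
have Radd : forall x z, R x -> R z -> R (x + z).
  move=> x z [t1 [H1 E1]] [t2 [H2 E2]]; exists (t1 ++ t2); split.
    by move=> p Hp; case: (List.in_app_or _ _ _ Hp) => ?; [apply: H1 | apply: H2].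
  by rewrite big_cat opprD addrACA; apply: LIadd.
have Rcb : forall c b, iprod G s b -> R (c * b).
  move=> c b Hb.
  have HBm : Wprod G B (idealMul m G).
    by exists [:: m]; split => //= m' [<-|[]]; apply: Hs; left.
  have := HHC HB HBm; rewrite (idealMulG HG Hm) => -[Hsum _].
  move/sumspE: (Hsum c) => [t0 [Ht0 E0]].
  exists [seq (p.1, p.2 * b) | p <- t0]; split.
    move=> p /List.in_map_iff [q [<- Hq]] /=; have [Hq1 Hq2] := Ht0 q Hq.
    split => //.
      case: Hq2 => J [HJ HJg]; exists J; split => // g Hg.
      rewrite /lmul mulrA; apply: LI_rmul => //; exact: HJg.
    case: (classic (leftIdeal m q.2)) => Hqm; [left; exact: LI_rmul | right].
    split => //; split => //; exists m; split; first by apply: Hs; left.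
    by split => //; exists q.2.
  by rewrite big_map -mulr_suml -mulrBl; apply: LI_rmul.
have HRy : R y.
  case: HyI' => n [a [g [Hg ->]]]; apply: (big_ind R) => // i _; exact: Rcb.
case: HRy => t [Ht Et].
have HBI : Wprod G B I by exists (m :: s).
have [_ Hd] := HHC HB HBI.
apply: NNPP => Hnp; apply: Hy.
pose S := (C, y) :: [seq (p.1, - p.2) | p <- t].
have HS : good (isClass G sim) (Defs.comp G (@lmul _ A) (leftIdeal I)) S.
  move=> p [<-|/List.in_map_iff [q [<- Hq]]] /=; first by split.
  have [? ? _] := Ht q Hq; split => //.
  exact: (comp_opp (@LIopp _ _ I) lmulD).
have HsumS : leftIdeal I (\sum_(p <- S) p.2) by rewrite /S big_cons big_map /= sumrN.
have := group_seq (@LI0 _ _ I) (@LIadd _ _ I)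
  (fun c x z Hc => comp_add HG (@LIadd _ _ I) lmulD Hc) Hd HS HsumS (fun E => dec (E = C)).
rewrite /S big_cons /=; case: decP => // _; rewrite big_map /= => HX.
have HX' : leftIdeal I (\sum_(p <- t | dec (p.1 = C)) - p.2).
  apply: (Nsum_seq (@LI0 _ _ I) (@LIadd _ _ I)) => p Hp /decP Hp1; apply: LIopp.
  have [_ _ [] //] := Ht p Hp; rewrite Hp1 => Hpg; case: Hnp; exact: rt_step.
by have := LIadd HX (LIopp HX'); rewrite addrK.
Qed.

End Main.

Section VMod.
Variables (k : fieldType) (A : algType k) (G : A -> Prop)
  (sim : (A -> Prop) -> (A -> Prop) -> Prop).
Hypotheses (HG : is_subalgebra G) (HHC : HC_block_subalgebra G sim).
Variables (V : lmodType k) (act : A -> V -> V).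
Hypothesis HV : is_Amodule act.

Lemma vD a x y : act a (x + y) = act a x + act a y.
Proof. by case: HV => [[H _] _ _ _ _]. Qed.
Lemma vZ a (c : k) x : act a (c *: x) = c *: act a x.
Proof. by case: HV => [[_ H] _ _ _ _]. Qed.
Lemma vDl a b x : act (a + b) x = act a x + act b x.
Proof. by case: HV. Qed.
Lemma vM a b x : act (a * b) x = act a (act b x).
Proof. by case: HV. Qed.
Lemma v0l x : act 0 x = 0.
Proof. by apply: (@addrI _ (act 0 x)); rewrite -vDl !addr0. Qed.
Lemma vNl a x : act (- a) x = - act a x.
Proof. by apply: (@addrI _ (act a x)); rewrite -vDl !subrr v0l. Qed.
Lemma v0r a : act a 0 = 0.
Proof. exact: (act0 vD). Qed.

Lemma v_suml (T : Type) (s : seq T) (F : T -> A) x :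
  act (\sum_(p <- s) F p) x = \sum_(p <- s) act (F p) x.
Proof.
elim: s => [|p s IH]; first by rewrite !big_nil v0l.
by rewrite !big_cons vDl IH.
Qed.

Lemma v_sumr (T : Type) (s : seq T) (F : T -> V) a :
  act a (\sum_(p <- s) F p) = \sum_(p <- s) act a (F p).
Proof.
elim: s => [|p s IH]; first by rewrite !big_nil v0r.
by rewrite !big_cons vD IH.
Qed.

Lemma v_LI (J : A -> Prop) r x : leftIdeal J r -> (forall g, J g -> act g x = 0) -> act r x = 0.
Proof.
move=> [n [a [g [Hg ->]]]] Hx.
rewrite v_suml big1 // => i _.
by rewrite vM Hx // v0r.
Qed.

Notation Z := (zeroV (V:=V)).

Lemma Z0 : Z 0. Proof. by []. Qed.
Lemma Zadd x y : Z x -> Z y -> Z (x + y). Proof. by rewrite /zeroV => -> ->; rewrite addr0. Qed.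
Lemma Zopp x : Z x -> Z (- x). Proof. by rewrite /zeroV => ->; rewrite oppr0. Qed.

Lemma VD0 D : VD G act D 0.
Proof. by apply/sumspE; exists [::]; split => //; rewrite big_nil subr0. Qed.

Lemma VDadd D x y : VD G act D x -> VD G act D y -> VD G act D (x + y).
Proof.
move=> /sumspE [t1 [H1 E1]] /sumspE [t2 [H2 E2]]; apply/sumspE; exists (t1 ++ t2); split.
  by move=> p Hp; case: (List.in_app_or _ _ _ Hp) => ?; [apply: H1 | apply: H2].
by rewrite big_cat opprD addrACA; apply: Zadd.
Qed.

Lemma VDsum D (T : Type) (s : seq T) (F : T -> V) :
  (forall p, List.In p s -> VD G act D (F p)) -> VD G act D (\sum_(p <- s) F p).
Proof.
elim: s => [|p s IH] H; first by rewrite big_nil; apply: VD0.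
by rewrite big_cons; apply: VDadd; [apply: H; left | apply: IH => q Hq; apply: H; right].
Qed.

Lemma compZ B (c : k) x : Defs.comp G act Z B x -> Defs.comp G act Z B (c *: x).
Proof. by move=> [I [HI H]]; exists I; split => // g Hg; rewrite vZ (H g Hg) scaler0. Qed.

Lemma VDscale D (c : k) x : VD G act D x -> VD G act D (c *: x).
Proof.
move=> /sumspE [t [H E]]; apply/sumspE; exists [seq (p.1, c *: p.2) | p <- t]; split.
  move=> p /List.in_map_iff [q [<- Hq]] /=; have [? ?] := H q Hq; split => //.
  exact: compZ.
by rewrite big_map /= -scaler_sumr -scalerBr E scaler0.
Qed.

Lemma VD_eq D x : VD G act D x -> exists t, good D (Defs.comp G act Z) t /\ x = \sum_(p <- t) p.2.
Proof. by move=> /sumspE [t [H E]]; exists t; split => //; apply/eqP; rewrite -subr_eq0; apply/eqP. Qed.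

Lemma VD_single D B x : D B -> Defs.comp G act Z B x -> VD G act D x.
Proof.
move=> HD Hx; apply/sumspE; exists [:: (B, x)]; split.
  by move=> p [<-|[]].
by rewrite big_cons big_nil addr0 subrr.
Qed.

Lemma mainM D : (forall B, D B -> isClass G sim B) ->
  (forall B C, D B -> prec G sim B C -> D C) ->
  forall B x a, D B -> Defs.comp G act Z B x -> VD G act D (act a x).
Proof.
move=> HD HDc B x a HDB [I [[s [Hs ->]] HIx]].
have HB := HD B HDB.
have [Hsum _] := HHC HB (ex_intro _ s (conj Hs erefl)).
move/sumspE: (Hsum a) => [t0 [Ht0 E0]].
apply/sumspE.
exists [seq (if dec (leftIdeal (iprod G s) p.2) then B else p.1, act p.2 x) | p <- t0]; split.
  move=> p /List.in_map_iff [q [<- Hq]] /=; have [Hq1 Hq2] := Ht0 q Hq.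
  case: decP => Hqi.
    split => //; rewrite (v_LI Hqi HIx).
    exact: (comp0 G Z0 vD B).
  split; first by apply: (HDc B) => //; apply: (suppS HG HHC HB Hs Hq1 Hq2 Hqi).
  case: Hq2 => J [HJ HJg]; exists J; split => // g Hg.
  by rewrite -vM; apply: v_LI HIx; apply: HJg.
rewrite big_map /=; have := v_LI E0 HIx.
by move=> E; rewrite /zeroV -[RHS]E vDl vNl v_suml.
Qed.

Lemma VD_sub D : (forall B, D B -> isClass G sim B) ->
  (forall B C, D B -> prec G sim B C -> D C) -> is_Asubmodule act (VD G act D).
Proof.
move=> HD HDc; split; [exact: VD0 | exact: VDadd | exact: VDscale |].
move=> a x /VD_eq [t [Ht ->]]; rewrite v_sumr; apply: VDsum => p Hp.
by have [H1 H2] := Ht p Hp; apply: (mainM HD HDc a H1 H2).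
Qed.

End VMod.

Lemma sum_filter0 (Z : zmodType) (T : Type) (s : seq T) (Q : pred T) (F : T -> Z) :
  (forall p, List.In p s -> Q p = false) -> \sum_(p <- s | Q p) F p = 0.
Proof.
elim: s => [|p s IH] H; first by rewrite big_nil.
rewrite big_cons H; last by left.
by apply: IH => q Hq; apply: H; right.
Qed.

Lemma sum_filter1 (Z : zmodType) (T : Type) (s : seq T) (Q : pred T) (F : T -> Z) :
  (forall p, List.In p s -> Q p) -> \sum_(p <- s | Q p) F p = \sum_(p <- s) F p.
Proof.
elim: s => [|p s IH] H; first by rewrite !big_nil.
rewrite !big_cons H; last by left.
by rewrite IH // => q Hq; apply: H; right.
Qed.

Lemma In_flatten (T : Type) (ss : seq (seq T)) p :
  List.In p (flatten ss) -> exists s, List.In s ss /\ List.In p s.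
Proof.
elim: ss => [|s ss IH] //= H.
case: (List.in_app_or _ _ _ H) => Hp; first by exists s; split => //; left.
by have [s' [H1 H2]] := IH Hp; exists s'; split => //; right.
Qed.

Section VThm.
Variables (k : fieldType) (A : algType k) (G : A -> Prop)
  (sim : (A -> Prop) -> (A -> Prop) -> Prop).
Hypotheses (HG : is_subalgebra G) (HHC : HC_block_subalgebra G sim).
Variables (V : lmodType k) (act : A -> V -> V).
Hypotheses (HV : is_Amodule act) (HVb : block_module G sim act (zeroV (V:=V))).

Notation Z := (zeroV (V:=V)).
Notation W := (Defs.comp G act Z).
Notation cls := (isClass G sim).

Lemma grp t : good cls W t -> Z (\sum_(p <- t) p.2) ->
  forall Q : pred ((A -> Prop) -> Prop), Z (\sum_(p <- t | Q p.1) p.2).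
Proof.
exact: (group_seq (N := Z) (Z0 V) (@Zadd _ V)
  (fun c x y Hc => comp_add HG (@Zadd _ V) (vD HV) Hc) HVb.2).
Qed.

Lemma good_neg (P : ((A -> Prop) -> Prop) -> Prop) t : good P W t ->
  good P W [seq (p.1, - p.2) | p <- t].
Proof.
move=> H p /List.in_map_iff [q [<- Hq]] /=; have [? ?] := H q Hq; split => //.
exact: (comp_opp (@Zopp _ V) (vD HV)).
Qed.

Lemma good_mono (P P' : ((A -> Prop) -> Prop) -> Prop) t :
  (forall B, P B -> P' B) -> good P W t -> good P' W t.
Proof. by move=> HP H p Hp; have [? ?] := H p Hp; split => //; apply: HP. Qed.

Lemma sum_neg (Q : pred ((A -> Prop) -> Prop)) (t : seq (((A -> Prop) -> Prop) * V)) :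
  \sum_(p <- [seq (p.1, - p.2) | p <- t] | Q p.1) p.2 = - \sum_(p <- t | Q p.1) p.2.
Proof. by rewrite big_map /= sumrN. Qed.

Lemma Veq x : exists t, good cls W t /\ x = \sum_(p <- t) p.2.
Proof.
have /sumspE [t [H E]] := HVb.1 x.
by exists t; split => //; apply/eqP; rewrite -subr_eq0; apply/eqP.
Qed.

Lemma prec_class B C : prec G sim B C -> cls B -> cls C.
Proof.
elim=> [x y [_ [H _]]|x|x y z _ IH1 _ IH2] //; by auto.
Qed.

Lemma prec_Delta B C : prec G sim B C -> Delta G sim B C.
Proof. exact: clos_rt_clos_rst. Qed.

Definition DC B := fun C => cls C /\ Delta G sim B C.

Lemma DC_sub B : is_Asubmodule act (VD G act (DC B)).
Proof.
apply: (VD_sub HG HHC HV); first by move=> C [].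
move=> C C' [HC HBC] HCC'; split; first exact: (prec_class HCC').
by apply: rst_trans HBC (prec_Delta HCC').
Qed.

Lemma partiii : indecomposable act -> forall B, Supp G sim act Z B ->
  forall C, Supp G sim act Z C -> Delta G sim B C.
Proof.
move=> [_ Hind] B [HB [x [Hx Hx0]]] C [HC [y [Hy Hy0]]].
pose D2 := fun C => cls C /\ ~ Delta G sim B C.
have HU2 : is_Asubmodule act (VD G act D2).
  apply: (VD_sub HG HHC HV); first by move=> E [].
  move=> E E' [HE HBE] HEE'; split; first exact: (prec_class HEE').
  move=> HBE'; apply: HBE; apply: rst_trans HBE' _; apply: rst_sym; exact: prec_Delta.
have := Hind _ _ (DC_sub B) HU2.
case.
- move=> v; have [t [Ht ->]] := Veq v.
  exists (\sum_(p <- t) (if dec (Delta G sim B p.1) then p.2 else 0)),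
         (\sum_(p <- t) (if dec (Delta G sim B p.1) then 0 else p.2)).
  split; [|split].
  + apply: VDsum => p Hp; case: (decP (Delta G sim B p.1)) => H; last exact: VD0.
    by apply: (@VD_single _ _ G V act (DC B) p.1 p.2); [split => //; have [] := Ht p Hp | have [] := Ht p Hp].
  + apply: VDsum => p Hp; case: (decP (Delta G sim B p.1)) => H; first exact: VD0.
    apply: (@VD_single _ _ G V act D2 p.1 p.2); last by have [] := Ht p Hp.
    by rewrite /D2; split => //; have [] := Ht p Hp.
  + by rewrite -big_split; apply: eq_bigr => p _; case: (decP (Delta G sim B p.1)) => _ /=; rewrite ?addr0 ?add0r.
- move=> v /VD_eq [t1 [H1 E1]] /VD_eq [t2 [H2 E2]].
  have HS : good cls W (t1 ++ [seq (p.1, - p.2) | p <- t2]).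
    move=> p Hp; case: (List.in_app_or _ _ _ Hp) => Hp'.
      by have [[? _] ?] := H1 p Hp'.
    have [[? _] ?] := good_neg H2 Hp'; done.
  have HZ : Z (\sum_(p <- t1 ++ [seq (p.1, - p.2) | p <- t2]) p.2).
    by rewrite big_cat big_map /= sumrN -E1 -E2 subrr.
  have := grp HS HZ (fun E => dec (Delta G sim B E)).
  rewrite big_cat /= (sum_neg (fun E => dec (Delta G sim B E))) (@sum_filter1 _ _ t1); last by move=> p Hp; apply/decP; have [[]] := H1 p Hp.
  rewrite (@sum_filter0 _ _ t2); last by move=> p Hp; apply/decP; have [[]] := H2 p Hp.
  by rewrite -E1 oppr0 addr0.
- move=> H0; apply: NNPP => HnBC; apply: Hx0; apply: H0.
  by apply: (VD_single (B := B)) => //; split => //; apply: rst_refl.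
- move=> H0; apply: NNPP => HnBC; apply: Hy0; apply: H0.
  by apply: (VD_single (B := C)).
Qed.


Lemma partiv_aux : irreducible act -> forall B, Supp G sim act Z B ->
  forall C, Supp G sim act Z C -> prec G sim B C.
Proof.
move=> [_ Hirr] B [HB [x [Hx Hx0]]] C [HC [y [Hy Hy0]]].
pose D := fun E => cls E /\ prec G sim B E.
have HU : is_Asubmodule act (VD G act D).
  apply: (VD_sub HG HHC HV); first by move=> E [].
  move=> E E' [HE HBE] HEE'; split; first exact: (prec_class HEE').
  exact: rt_trans HBE HEE'.
case: (Hirr _ HU) => H0.
  case: Hx0; apply: H0; apply: (@VD_single _ _ G V act D B x) => //.
  by split => //; apply: rt_refl.
apply: NNPP => HnBC; apply: Hy0.
have /VD_eq [t [Ht Et]] := H0 y.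
pose S := (C, y) :: [seq (p.1, - p.2) | p <- t].
have HS : good cls W S.
  move=> p [<-|Hp]; first by split.
  by have [[? _] ?] := good_neg Ht Hp.
have HZ : Z (\sum_(p <- S) p.2) by rewrite /S big_cons big_map /= sumrN -Et subrr.
have := grp HS HZ (fun E => dec (E = C)).
rewrite /S big_cons /=; case: (decP (C = C)) => // _.
rewrite (sum_neg (fun E => dec (E = C))) (@sum_filter0 _ _ t); first by rewrite oppr0 addr0.
move=> p Hp; apply/decP => Hp1; apply: HnBC; rewrite -Hp1; by have [[]] := Ht p Hp.
Qed.

Definition PDD (DD : ((A -> Prop) -> Prop) -> Prop) :=
  exists B, cls B /\ DD = (fun C => cls C /\ Delta G sim B C).

Lemma DC_eq B1 B2 E : Delta G sim B1 E -> Delta G sim B2 E ->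
  (fun C => cls C /\ Delta G sim B1 C) = (fun C => cls C /\ Delta G sim B2 C).
Proof.
move=> H1 H2; apply: functional_extensionality => C; apply: propositional_extensionality.
have H12 : Delta G sim B1 B2 by apply: rst_trans H1 (rst_sym _ _ _ _ H2).
split=> -[HC HD]; split => //.
  by apply: rst_trans (rst_sym _ _ _ _ H12) HD.
by apply: rst_trans H12 HD.
Qed.

Lemma partii_cover x : sumsp Z PDD (VD G act) x.
Proof.
have /sumspE [t [Ht E]] := HVb.1 x.
apply/sumspE; exists [seq (DC p.1, p.2) | p <- t]; split; last by rewrite big_map.
move=> p /List.in_map_iff [q [<- Hq]] /=; have [Hq1 Hq2] := Ht q Hq; split.
  by exists q.1.
by apply: (@VD_single _ _ G V act (DC q.1) q.1 q.2) => //; split => //; apply: rst_refl.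
Qed.

Lemma partii_direct n (j : 'I_n -> ((A -> Prop) -> Prop) -> Prop) (w : 'I_n -> V) :
  injective j -> (forall i, PDD (j i) /\ VD G act (j i) (w i)) ->
  Z (\sum_(i < n) w i) -> forall i, Z (w i).
Proof.
move=> Hinj Hjw Hs i0.
have [f Hf] : exists f : 'I_n -> seq (((A -> Prop) -> Prop) * V),
    forall i, good (j i) W (f i) /\ w i = \sum_(p <- f i) p.2.
  apply: (@fin_all_exists _ (fun _ => seq (((A -> Prop) -> Prop) * V))
    (fun i u => good (j i) W u /\ w i = \sum_(p <- u) p.2)) => i.
  exact: VD_eq (Hjw i).2.
pose S := flatten [seq f i | i <- index_enum 'I_n].
have HS : good cls W S.
  move=> p Hp0; have [s [Hs0 Hp]] := In_flatten Hp0.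
  move: Hs0 Hp => /List.in_map_iff [i [<- _]] Hp.
  have [Hg _] := Hf i; have [Hj HW] := Hg p Hp; split => //.
  by have [B [_ EB]] := (Hjw i).1; move: Hj; rewrite EB => -[].
have HZ : Z (\sum_(p <- S) p.2).
  rewrite /S big_flatten big_map /=.
  by rewrite (eq_bigr _ (fun i _ => esym (Hf i).2)).
have := grp HS HZ (fun E => dec (j i0 E)).
rewrite /S big_flatten big_map /= (bigD1 i0) //= [X in _ + X]big1 ?addr0.
  rewrite (@sum_filter1 _ _ (f i0)) -?(Hf i0).2 //.
  by move=> p Hp; apply/decP; have [Hg _] := Hf i0; have [] := Hg p Hp.
move=> i Hi; apply: sum_filter0 => p Hp; apply/decP => Hpi0.
have [Hg _] := Hf i; have [Hpi _] := Hg p Hp.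
have [B1 [_ EB1]] := (Hjw i).1; have [B2 [_ EB2]] := (Hjw i0).1.
move: Hpi Hpi0; rewrite EB1 EB2 => -[_ D1] [_ D2].
move/eqP: Hi; apply; apply: Hinj; rewrite EB1 EB2; exact: DC_eq D1 D2.
Qed.

End VThm.

Theorem mainTheorem19 (k : fieldType) (A : algType k) (G : A -> Prop)
  (sim : (A -> Prop) -> (A -> Prop) -> Prop)
  (HG : is_subalgebra G) (Hsim : equiv_on (cfs G) sim)
  (HHC : HC_block_subalgebra G sim)
  (V : lmodType k) (act : A -> V -> V)
  (HV : is_Amodule act) (HVb : block_module G sim act (zeroV (V:=V))) :
  (* (i) *)
  (forall D : ((A -> Prop) -> Prop) -> Prop,
     (forall B, D B -> isClass G sim B) ->
     (forall B C, D B -> prec G sim B C -> D C) ->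
     is_Asubmodule act (VD G act D)) /\
  (* (ii) *)
  ((forall DD, (exists B, isClass G sim B /\
                  DD = (fun C => isClass G sim C /\ Delta G sim B C)) ->
       is_Asubmodule act (VD G act DD)) /\
   is_dsum (zeroV (V:=V))
     (fun DD => exists B, isClass G sim B /\
                  DD = (fun C => isClass G sim C /\ Delta G sim B C))
     (VD G act)) /\
  (* (iii) *)
  (indecomposable act -> forall B, Supp G sim act (zeroV (V:=V)) B ->
     forall C, Supp G sim act (zeroV (V:=V)) C -> Delta G sim B C) /\
  (* (iv) *)
  (irreducible act -> forall B, Supp G sim act (zeroV (V:=V)) B ->
     forall C, Supp G sim act (zeroV (V:=V)) C -> nabla G sim B C).
Proof.
split.
  by move=> D HD HDc; exact: (VD_sub HG HHC HV HD HDc).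
split.
  split.
    by move=> DD [B [HB ->]]; exact: (DC_sub HG HHC HV B).
  by split; [exact: (partii_cover HVb) | exact: (partii_direct HG HV HVb)].
split.
  exact: (partiii HG HHC HV HVb).
move=> Hirr B HBs C HCs; split.
  exact: (partiv_aux HG HHC HV HVb Hirr HBs HCs).
exact: (partiv_aux HG HHC HV HVb Hirr HCs HBs).
Qed.
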